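(* Let $K=\mathbb C$, $m=n=2$ (hence $p=2$), let $c\ge1$ and $d\ge 2$ be integers, and let $B=\begin{pmatrix}0&-c\\ d&0\end{pmatrix}$. Then for any pair $\mathbf x=(x_1,x_2)$ of algebraically independent elements of $\mathbb C(X_1,X_2)$, the cluster algebra $\mathcal A(\mathbf x,B)$ is not factorial.
   Context: Let $\mathcal F=\mathbb C(X_1,X_2)$. For $B\in M_{2,2}(\mathbb Z)$ as given and $\mathbf x=(x_1,x_2)$ algebraically independent over $\mathbb C$, $(\mathbf x,B)$ is a seed. For $k\in\{1,2\}$ the mutation $\mu_k(\mathbf x,B)=(\mathbf x',B')$ is given by $b'_{ij}=-b_{ij}$ if $i=k$ or $j=k$, and $b'_{ij}=b_{ij}+\frac{|b_{ik}|b_{kj}+b_{ik}|b_{kj}|}{2}$ otherwise; $x'_s=x_s$ for $s\neq k$ and $x'_k=x_k^{-1}\big(\prod_{b_{ik}>0}x_i^{b_{ik}}+\prod_{b_{ik}<0}x_i^{-b_{ik}}\big)$. The cluster algebra $\mathcal A(\mathbf x,B)$ is the $\mathbb C$-subalgebra of $\mathcal F$ generated by all entries $y_1,y_2$ of all seeds $(\mathbf y,C)$ obtained from $(\mathbf x,B)$ by finite sequences of mutations. *)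

(* Defs.v *)
From HB Require Import structures.
From mathcomp Require Import all_boot all_order all_algebra.
From mathcomp Require Import complex fraction intdiv.
From mathcomp Require Import Rstruct.
From Stdlib Require Import Rdefinitions.

Set Implicit Arguments.
Unset Strict Implicit.
Unset Printing Implicit Defensive.

Import Order.TTheory GRing.Theory Num.Theory.
Local Open Scope ring_scope.

Definition CC : Type := (Rdefinitions.R)[i].

Definition FF : Type := {fraction {poly {poly CC}}}.

Definition cst (c : CC) : FF := @FracField.tofrac {poly {poly CC}} (c%:P%:P).

Definition eval2 (P : {poly {poly CC}}) (a b : FF) : FF :=
  (map_poly (fun q : {poly CC} => (map_poly cst q).[a]) P).[b].

Definition alg_indep (x : 'I_2 -> FF) : Prop :=
  forall P : {poly {poly CC}}, P != 0 -> eval2 P (x ord0) (x ord_max) != 0.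

Definition seed : Type := ('I_2 -> FF) * 'M[int]_2.

Definition mut_mx (k : 'I_2) (B : 'M[int]_2) : 'M[int]_2 :=
  \matrix_(i < 2, j < 2)
    if (i == k) || (j == k) then - B i j
    else B i j + divz ((absz (B i k))%:Z * B k j + B i k * (absz (B k j))%:Z) 2.

Definition mut_cl (k : 'I_2) (x : 'I_2 -> FF) (B : 'M[int]_2) : 'I_2 -> FF :=
  fun s => if s == k then
    (x k)^-1 * (\prod_(i < 2 | 0 < B i k) x i ^+ absz (B i k)
                + \prod_(i < 2 | B i k < 0) x i ^+ absz (B i k))
  else x s.

Definition mutate (k : 'I_2) (S : seed) : seed :=
  (mut_cl k S.1 S.2, mut_mx k S.2).

Definition mutseq (ks : seq 'I_2) (S : seed) : seed :=
  foldl (fun S k => mutate k S) S ks.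

Definition cluster_var (x : 'I_2 -> FF) (B : 'M[int]_2) (y : FF) : Prop :=
  exists (ks : seq 'I_2) (i : 'I_2), y = (mutseq ks (x, B)).1 i.

Inductive gen_alg (G : FF -> Prop) : FF -> Prop :=
  | ga_cst c : gen_alg G (cst c)
  | ga_gen y : G y -> gen_alg G y
  | ga_add y z : gen_alg G y -> gen_alg G z -> gen_alg G (y + z)
  | ga_mul y z : gen_alg G y -> gen_alg G z -> gen_alg G (y * z).

Definition cluster_alg (x : 'I_2 -> FF) (B : 'M[int]_2) : FF -> Prop :=
  gen_alg (cluster_var x B).

Definition unitA (A : FF -> Prop) (a : FF) : Prop :=
  A a /\ exists b, A b /\ a * b = 1.

Definition irredA (A : FF -> Prop) (a : FF) : Prop :=
  [/\ A a, a != 0, ~ unitA A a &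
      forall b c, A b -> A c -> a = b * c -> unitA A b \/ unitA A c].

Definition assocA (A : FF -> Prop) (a b : FF) : Prop :=
  exists u, unitA A u /\ a = u * b.

Definition factorial_ring (A : FF -> Prop) : Prop :=
  (forall a, A a -> a != 0 -> ~ unitA A a ->
     exists s : seq FF, (forall y, y \in s -> irredA A y) /\ a = \prod_(y <- s) y)
  /\
  (forall s t : seq FF,
     (forall y, y \in s -> irredA A y) -> (forall y, y \in t -> irredA A y) ->
     \prod_(y <- s) y = \prod_(y <- t) y ->
     exists t' : seq FF, [/\ perm_eq t t', size s = size t' &
        forall i : nat, leq i.+1 (size s) -> assocA A (nth 0 s i) (nth 0 t' i)]).

Definition Bcd (c d : nat) : 'M[int]_2 :=
  \matrix_(i < 2, j < 2)
    if (i == ord0) && (j == ord_max) then - (c%:Z)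
    else if (i == ord_max) && (j == ord0) then d%:Z else 0.

(* Main.v *)
Require Import Defs.
From HB Require Import structures.
From mathcomp Require Import all_boot all_order all_algebra.
From mathcomp Require Import complex fraction intdiv.
From mathcomp Require Import Rstruct.
From mathcomp Require Import ring.
Set Implicit Arguments. Unset Strict Implicit. Unset Printing Implicit Defensive.
Import Order.TTheory GRing.Theory Num.Theory.
Local Open Scope ring_scope.
From Stdlib Require Classical_Prop.

Section Ev.
Variables (F : fieldType) (iota : {rmorphism CC -> F}) (a b : F).
Definition evi : {rmorphism {poly CC} -> F} := horner_eval a \o map_poly iota.
Definition ev : {rmorphism {poly {poly CC}} -> F} := horner_eval b \o map_poly evi.
Lemma evC c : ev (c%:P%:P) = iota c.
Proof. rewrite /= map_polyC /horner_eval /= (hornerC _ b) map_polyC /horner_eval /= (hornerC _ a) //. Qed.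
Lemma evX : ev 'X = b.
Proof. rewrite /= map_polyX /horner_eval /= (hornerX b) //. Qed.
Lemma evY1 : ev ('X%:P) = a.
Proof. rewrite /= map_polyC /horner_eval /= (hornerC _ b) map_polyX /horner_eval /= (hornerX a) //. Qed.
End Ev.

Definition cstm : {rmorphism CC -> FF} := (@tofrac _) \o polyC \o polyC.
Lemma cstmE c : cstm c = cst c. Proof. by []. Qed.
Lemma eval2E P a b : eval2 P a b = ev cstm a b P. Proof. by []. Qed.

Section Vrel.
Variables (y1 y2 : FF).
Hypothesis hy : forall P, P != 0 -> eval2 P y1 y2 != 0.
Variables (F : fieldType) (iota : {rmorphism CC -> F}) (a b : F).
Definition vrel (f : FF) (v : F) :=
  exists P Q, ev iota a b Q != 0 /\ f * ev cstm y1 y2 Q = ev cstm y1 y2 P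
     /\ v = ev iota a b P / ev iota a b Q.

Lemma Einj P : ev cstm y1 y2 P = 0 -> P = 0.
Proof. move=> h; apply/eqP; apply/negPn/negP => /hy; by rewrite eval2E h eqxx. Qed.

Lemma vrel_uniq f v w : vrel f v -> vrel f w -> v = w.
Proof.
move=> [P [Q [hQ [hf ->]]]] [P' [Q' [hQ' [hf' ->]]]].
have e : P * Q' - P' * Q = 0.
  apply: Einj; rewrite rmorphB !rmorphM -hf -hf'; ring.
have e2 : ev iota a b P * ev iota a b Q' = ev iota a b P' * ev iota a b Q.
  by apply/eqP; rewrite -subr_eq0 -!rmorphM -rmorphB e rmorph0.
by apply/eqP; rewrite eqr_div // e2.
Qed.

Lemma vrel_cst c : vrel (cst c) (iota c).
Proof.
exists (c%:P%:P), 1; rewrite !rmorph1 oner_eq0 mulr1 divr1 !evC; split => //.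
Qed.
Lemma vrel_y1 : vrel y1 a.
Proof. exists ('X%:P), 1; rewrite !rmorph1 oner_eq0 mulr1 divr1 !evY1; split => //. Qed.
Lemma vrel_y2 : vrel y2 b.
Proof. exists 'X, 1; rewrite !rmorph1 oner_eq0 mulr1 divr1 !evX; split => //. Qed.

Lemma vrel_add f g v w : vrel f v -> vrel g w -> vrel (f + g) (v + w).
Proof.
move=> [P [Q [hQ [hf ->]]]] [P' [Q' [hQ' [hg ->]]]].
exists (P * Q' + P' * Q), (Q * Q'); rewrite !rmorphD !rmorphM mulf_neq0 //; split => //; split.
  by rewrite -hf -hg; ring.
by field; apply/andP.
Qed.

Lemma vrel_mul f g v w : vrel f v -> vrel g w -> vrel (f * g) (v * w).
Proof.
move=> [P [Q [hQ [hf ->]]]] [P' [Q' [hQ' [hg ->]]]].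
exists (P * P'), (Q * Q'); rewrite !rmorphM mulf_neq0 //; split => //; split.
  by rewrite -hf -hg; ring.
by field; apply/andP.
Qed.

Lemma vrel_inv f v : vrel f v -> v != 0 -> vrel f^-1 v^-1.
Proof.
move=> [P [Q [hQ [hf ->]]]] hv.
have hP : ev iota a b P != 0 by move: hv; rewrite mulf_eq0 negb_or => /andP[].
have P0 : P != 0 by apply: contraNneq hP => ->; rewrite rmorph0.
have EP : ev cstm y1 y2 P != 0 by rewrite -eval2E hy.
have f0 : f != 0 by apply: contraNneq EP => f0; rewrite -hf f0 mul0r.
exists Q, P; split => //; split; last by rewrite invf_div.
by rewrite -hf mulrA mulVf // mul1r.
Qed.
End Vrel.

Section Val1.
Variable z : CC.
Definition val1 (g : {fraction {poly CC}}) (v : CC) :=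
  exists p q : {poly CC}, q.[z] != 0 /\ g * tofrac q = tofrac p /\ v = p.[z] / q.[z].

Lemma val1_uniq g v w : val1 g v -> val1 g w -> v = w.
Proof.
move=> [P [Q [hQ [hf ->]]]] [P' [Q' [hQ' [hf' ->]]]].
have e : P * Q' = P' * Q.
  apply/eqP; rewrite -tofrac_eq !tofracM -hf -hf'; apply/eqP; ring.
by apply/eqP; rewrite eqr_div // -!hornerM e.
Qed.
Lemma val1_cst c : val1 (tofrac c%:P) c.
Proof. exists c%:P, 1; rewrite !hornerC tofrac1 mulr1 divr1; split => //; exact: oner_neq0. Qed.
Lemma val1_tofrac p : val1 (tofrac p) p.[z].
Proof. exists p, 1; rewrite !hornerC tofrac1 mulr1 divr1; split => //; exact: oner_neq0. Qed.
Lemma val1_add f g v w : val1 f v -> val1 g w -> val1 (f + g) (v + w).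
Proof.
move=> [P [Q [hQ [hf ->]]]] [P' [Q' [hQ' [hg ->]]]].
exists (P * Q' + P' * Q), (Q * Q'); rewrite !hornerE mulf_neq0 //; split => //; split.
  by rewrite tofracD !tofracM -hf -hg; ring.
by field; apply/andP.
Qed.
Lemma val1_mul f g v w : val1 f v -> val1 g w -> val1 (f * g) (v * w).
Proof.
move=> [P [Q [hQ [hf e1]]]] [P' [Q' [hQ' [hg e2]]]].
exists (P * P'), (Q * Q'); rewrite !hornerE mulf_neq0 //; split => //; split.
  by rewrite !tofracM -hf -hg; ring.
by rewrite e1 e2; field; apply/andP.
Qed.
Lemma val1_nz g v : val1 g v -> v != 0 -> g != 0.
Proof.
move=> [P [Q [hQ [hf ->]]]] hv; apply/negP => /eqP g0.
move: hf; rewrite g0 mul0r => /esym/eqP; rewrite tofrac_eq0 => /eqP P0.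
by move: hv; rewrite P0 horner0 mul0r eqxx.
Qed.
Lemma val1_inv f v : val1 f v -> v != 0 -> val1 f^-1 v^-1.
Proof.
move=> h hv; have f0 := val1_nz h hv; move: h => [P [Q [hQ [hf e]]]].
have hP : P.[z] != 0 by move: hv; rewrite e mulf_eq0 negb_or => /andP[].
exists Q, P; split => //; split; last by rewrite e invf_div.
have Q0 : Q != 0 by apply: contraNneq hQ => ->; rewrite horner0.
by rewrite -hf mulrA mulVf // mul1r.
Qed.
End Val1.

Record goodV (V : FF -> CC -> Prop) : Prop := GoodV {
  gv_uniq : forall f v w, V f v -> V f w -> v = w;
  gv_cst : forall c, V (cst c) c;
  gv_add : forall f g v w, V f v -> V g w -> V (f + g) (v + w);
  gv_mul : forall f g v w, V f v -> V g w -> V (f * g) (v * w);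
  gv_inv : forall f v, V f v -> v != 0 -> V f^-1 v^-1 }.

Definition dom (V : FF -> CC -> Prop) f := exists v, V f v.

Lemma cst1 : cst 1 = 1. Proof. by rewrite -cstmE rmorph1. Qed.
Lemma cst0 : cst 0 = 0. Proof. by rewrite -cstmE rmorph0. Qed.
Lemma cstD a b : cst (a + b) = cst a + cst b. Proof. by rewrite -!cstmE rmorphD. Qed.
Lemma cstM a b : cst (a * b) = cst a * cst b. Proof. by rewrite -!cstmE rmorphM. Qed.
Lemma cstN a : cst (- a) = - cst a. Proof. by rewrite -!cstmE rmorphN. Qed.
Lemma cstV a : cst (a^-1) = (cst a)^-1. Proof. by rewrite -!cstmE fmorphV. Qed.
Lemma cst_eq0 a : (cst a == 0) = (a == 0). Proof. by rewrite -cstmE fmorph_eq0. Qed.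

Section GoodV.
Variables (V : FF -> CC -> Prop) (hV : goodV V).
Lemma gv_one : V 1 1. Proof. by rewrite -cst1; apply: gv_cst. Qed.
Lemma gv_zero : V 0 0. Proof. by rewrite -cst0; apply: gv_cst. Qed.
Lemma gv_nz f v : V f v -> v != 0 -> f != 0.
Proof. move=> h hv; apply: contraNneq hv => f0; apply/eqP; apply: (gv_uniq hV h); rewrite f0; exact: gv_zero. Qed.
Lemma gv_exp f v n : V f v -> V (f ^+ n) (v ^+ n).
Proof. move=> h; elim: n => [|n ih]; first by rewrite !expr0; apply: gv_one. by rewrite !exprS; apply: gv_mul. Qed.
Lemma gv_opp f v : V f v -> V (- f) (- v).
Proof. by move=> h; rewrite -mulN1r -(mulN1r v) -cst1 -cstN; apply: gv_mul => //; apply: gv_cst. Qed.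
Lemma gv_sub f g v w : V f v -> V g w -> V (f - g) (v - w).
Proof. by move=> h1 h2; apply: gv_add => //; apply: gv_opp. Qed.
Lemma dom_add f g : dom V f -> dom V g -> dom V (f + g).
Proof. by move=> [v h1] [w h2]; exists (v + w); apply: gv_add. Qed.
Lemma dom_mul f g : dom V f -> dom V g -> dom V (f * g).
Proof. by move=> [v h1] [w h2]; exists (v * w); apply: gv_mul. Qed.
Lemma dom_exp f n : dom V f -> dom V (f ^+ n).
Proof. by move=> [v h1]; exists (v ^+ n); apply: gv_exp. Qed.
Lemma dom_cst c : dom V (cst c). Proof. by exists c; apply: gv_cst. Qed.
Lemma dom1 : dom V 1. Proof. by exists 1; apply: gv_one. Qed.
Lemma dom_sum n (F : 'I_n -> FF) : (forall i, dom V (F i)) -> dom V (\sum_(i < n) F i).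
Proof.
move=> h; apply: (big_ind (dom V)) => //; first by exists 0; apply: gv_zero.
exact: dom_add.
Qed.
End GoodV.

Section Inst.
Variables (y1 y2 : FF).
Hypothesis hy : forall P, P != 0 -> eval2 P y1 y2 != 0.

Lemma good_pt (al be : CC) : goodV (vrel y1 y2 idfun al be).
Proof.
split.
- exact: vrel_uniq.
- by move=> c; apply: (vrel_cst y1 y2 idfun).
- exact: vrel_add.
- exact: vrel_mul.
- exact: vrel_inv.
Qed.

Definition iK : {rmorphism CC -> {fraction {poly CC}}} := (@tofrac _) \o polyC.
Definition Vc (g1 g2 : {fraction {poly CC}}) (z : CC) (f : FF) (v : CC) :=
  exists g, vrel y1 y2 iK g1 g2 f g /\ val1 z g v.

Lemma good_c g1 g2 z : goodV (Vc g1 g2 z).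
Proof.
split.
- move=> f v w [g [h1 h2]] [g' [h1' h2']].
  by move: h2'; rewrite -(vrel_uniq hy h1 h1') => h2'; apply: val1_uniq h2 h2'.
- by move=> c; exists (iK c); split; [apply: vrel_cst | apply: val1_cst].
- move=> f g v w [a [h1 h2]] [b [h1' h2']]; exists (a + b); split;
    [exact: vrel_add | exact: val1_add].
- move=> f g v w [a [h1 h2]] [b [h1' h2']]; exists (a * b); split;
    [exact: vrel_mul | exact: val1_mul].
- move=> f v [a [h1 h2]] hv; exists a^-1; split; last exact: val1_inv.
  by apply: vrel_inv => //; apply: val1_nz h2 hv.
Qed.
End Inst.

Fixpoint up (eo ee : nat) (a b : FF) n : FF * FF :=
  if n is n'.+1 then let p := up eo ee a b n' in
    (p.2, (p.2 ^+ (if odd n' then ee else eo) + 1) / p.1)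
  else (a, b).
Definition us eo ee a b n := (up eo ee a b n).1.
Definition Ef (eo ee : nat) k := if odd k then eo else ee.

Lemma us0 eo ee a b : us eo ee a b 0 = a. Proof. by []. Qed.
Lemma us1 eo ee a b : us eo ee a b 1 = b. Proof. by []. Qed.
Lemma usSS eo ee a b n :
  us eo ee a b n.+2 = (us eo ee a b n.+1 ^+ Ef eo ee n.+1 + 1) / us eo ee a b n.
Proof. by rewrite /us /Ef /=; case: (odd n). Qed.

Section Local.
Variables (V : FF -> CC -> Prop) (hV : goodV V) (f : nat -> FF) (E : nat -> nat).
Hypotheses (fnz : forall n, f n != 0)
  (frel : forall n, f n * f n.+2 = f n.+1 ^+ E n.+1 + 1)
  (Eper : forall n, E n.+2 = E n) (Epos : forall n, (0 < E n)%N).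

Lemma local_step n : dom V (f n) -> dom V (f n.+1) -> dom V (f n.+2) -> dom V (f n.+3) ->
  dom V (f n.+4).
Proof.
move=> d0 d1 [v2 h2] d3.
have r1 : f n * f n.+2 = f n.+1 ^+ E n.+1 + 1 by apply: frel.
have r2 : f n.+1 * f n.+3 = f n.+2 ^+ E n.+2 + 1 by apply: frel.
have r3 : f n.+2 * f n.+4 = f n.+3 ^+ E n.+1 + 1 by rewrite -(Eper n.+1); apply: frel.
have y2nz : f n.+2 != 0 by apply: fnz.
have y1nz : f n.+1 != 0 by apply: fnz.
move: r1 r2 r3 y2nz y1nz d0 d1 d3 h2.
move: (f n) (f n.+1) (f n.+2) (f n.+3) (f n.+4) (E n.+1) (E n.+2) (Epos n.+2)
  => y0 y1 y2 y3 y4 e e' e'pos r1 r2 r3 y2nz y1nz d0 d1 d3 h2.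
have [v20|v2nz] := eqVneq v2 0; last first.
  have -> : y4 = (y3 ^+ e + 1) * y2^-1.
    by rewrite -r3 mulrC mulrA (mulVf y2nz) mul1r.
  apply: (dom_mul hV) => //; first by apply: (dom_add hV) => //; [apply: (dom_exp hV)|apply: (dom1 hV)].
  by exists v2^-1; apply: (gv_inv hV).
move: d1 => [v1 h1]; move: d3 => [v3 h3].
have v1nz : v1 != 0.
  have : V (y1 * y3) (v1 * v3) by apply: (gv_mul hV).
  rewrite r2 => h; have := gv_add hV (gv_exp hV e' h2) (gv_one hV).
  rewrite v20 expr0n eqn0Ngt e'pos /= add0r => h'.
  have := gv_uniq hV h h' => e1; apply/negP => /eqP v10.
  by move: e1; rewrite v10 mul0r => /eqP; rewrite eq_sym oner_eq0.
pose X := y2 ^+ e' + 1.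
pose S := \sum_(i < e) X ^+ (e.-1 - i) * 1 ^+ i.
have hXX : X ^+ e - 1 ^+ e = (X - 1) * S by rewrite subrXX.
have hX1 : X - 1 = y2 * y2 ^+ e'.-1 by rewrite /X addrK -exprS (prednK e'pos).
have key : y4 * y1 ^+ e = y2 ^+ e'.-1 * S + y0.
  apply: (mulfI y2nz).
  have L : y2 * (y4 * y1 ^+ e) = X ^+ e + y1 ^+ e.
    by rewrite mulrA r3 mulrDl mul1r -exprMn (mulrC y3) r2.
  have R : y2 * (y2 ^+ e'.-1 * S + y0) = (X - 1) * S + (y1 ^+ e + 1).
    by rewrite mulrDr mulrA -hX1 (mulrC y2) r1.
  rewrite L R -hXX expr1n; ring.
have -> : y4 = (y2 ^+ e'.-1 * S + y0) * (y1^-1) ^+ e.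
  by rewrite -key -mulrA -exprMn (mulfV y1nz) expr1n mulr1.
apply: (dom_mul hV) => //; last by exists (v1^-1 ^+ e); apply: (gv_exp hV); apply: (gv_inv hV).
apply: (dom_add hV) => //; apply: (dom_mul hV) => //; first by apply: (dom_exp hV); exists v2.
apply: (dom_sum hV) => // i; apply: (dom_mul hV) => //; apply: (dom_exp hV) => //; last exact: (dom1 hV).
by apply: (dom_add hV) => //; [apply: (dom_exp hV); exists v2 | exact: (dom1 hV)].
Qed.

Lemma local_all : dom V (f 0) -> dom V (f 1) -> dom V (f 2) -> dom V (f 3) ->
  forall n, dom V (f n).
Proof.
move=> d0 d1 d2 d3.
suff h : forall n, [/\ dom V (f n), dom V (f n.+1), dom V (f n.+2) & dom V (f n.+3)].
  by move=> n; case: (h n).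
elim=> [|n [a b c e]]; first by split.
by split => //; apply: local_step.
Qed.
End Local.

Lemma prod2 (R : comNzRingType) (P : pred 'I_2) (F : 'I_2 -> R) :
  \prod_(i < 2 | P i) F i = (if P ord0 then F ord0 else 1) * (if P ord_max then F ord_max else 1).
Proof.
rewrite big_mkcond /= !big_ord_recl big_ord0 mulr1 /=.
by have -> : lift ord0 ord0 = ord_max :> 'I_2 by apply: val_inj.
Qed.

Lemma ord2P (i : 'I_2) : i = ord0 \/ i = ord_max.
Proof. by case: i => [[|[|//]] Hi]; [left|right]; apply: val_inj. Qed.

Section Seeds.
Variables (c d : nat) (hc : (1 <= c)%N) (hd : (2 <= d)%N).
Let B := Bcd c d.
Definition Msg (sg : bool) := if sg then B else - B.

Lemma Bent : [/\ B ord0 ord0 = 0, B ord0 ord_max = - c%:Z,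
   B ord_max ord0 = d%:Z & B ord_max ord_max = 0].
Proof. by rewrite /B !mxE. Qed.

Lemma mut_mxB k sg : mut_mx k (Msg sg) = Msg (~~ sg).
Proof.
have [e00 e01 e10 e11] := Bent.
apply/matrixP => i j; rewrite /Msg !mxE.
have o10 : (ord_max == ord0 :> 'I_2) = false by [].
have o01 : (ord0 == ord_max :> 'I_2) = false by [].
case: sg => /=; case: (ord2P k) => ->; case: (ord2P i) => ->; case: (ord2P j) => -> /=;
  rewrite ?mxE !eqxx ?o10 ?o01 /= ?opprK ?oppr0 //.
all: rewrite ?add0r ?abszN ?opprK /=.
all: by rewrite ?mulrN ?mulNr ?addNr ?addrN div0z.
Qed.

Lemma o10 : (ord_max == ord0 :> 'I_2) = false. Proof. by []. Qed.
Lemma o01 : (ord0 == ord_max :> 'I_2) = false. Proof. by []. Qed.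
Lemma M00 sg : Msg sg ord0 ord0 = 0.
Proof. by case: sg; rewrite /Msg !mxE !eqxx ?o10 ?o01 /= ?oppr0. Qed.
Lemma M11 sg : Msg sg ord_max ord_max = 0.
Proof. by case: sg; rewrite /Msg !mxE !eqxx ?o10 ?o01 /= ?oppr0. Qed.
Lemma M01 sg : Msg sg ord0 ord_max = if sg then - c%:Z else c%:Z.
Proof. by case: sg; rewrite /Msg !mxE !eqxx ?o10 ?o01 /= ?opprK. Qed.
Lemma M10 sg : Msg sg ord_max ord0 = if sg then d%:Z else - d%:Z.
Proof. by case: sg; rewrite /Msg !mxE !eqxx ?o10 ?o01 /= ?opprK. Qed.

Lemma intpos (n : nat) : (0 < n)%N -> [/\ (0 < n%:Z) = true, (n%:Z < 0) = false,
  (0 < - n%:Z) = false & (- n%:Z < 0) = true].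
Proof. by move=> h; rewrite oppr_gt0 oppr_lt0 !ltz_nat h ltn0. Qed.

Lemma mut_cl0 (z : 'I_2 -> FF) sg :
  mut_cl ord0 z (Msg sg) ord0 = (z ord0)^-1 * (z ord_max ^+ d + 1).
Proof.
have d0 : (0 < d)%N by apply: leq_trans hd.
have [p1 p2 p3 p4] := intpos d0.
rewrite /mut_cl eqxx !prod2 M00 M10 ltxx /=; case: sg.
- by rewrite p1 p2 !mul1r.
- by rewrite p3 p4 !mul1r abszN addrC.
Qed.

Lemma mut_cl1 (z : 'I_2 -> FF) sg :
  mut_cl ord_max z (Msg sg) ord_max = (z ord_max)^-1 * (z ord0 ^+ c + 1).
Proof.
have [p1 p2 p3 p4] := intpos hc.
rewrite /mut_cl eqxx !prod2 M11 M01 ltxx /=; case: sg.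
- by rewrite p3 p4 !mulr1 abszN addrC.
- by rewrite p1 p2 !mulr1.
Qed.

Lemma mut_cl_other k (z : 'I_2 -> FF) M s : s != k -> mut_cl k z M s = z s.
Proof. by rewrite /mut_cl => /negPf ->. Qed.

Definition Inv_at (u : nat -> FF) (sg : bool) (S : seed) n :=
  if ~~ odd n then [/\ S.2 = Msg sg, S.1 ord0 = u n & S.1 ord_max = u n.+1]
  else [/\ S.2 = Msg (~~ sg), S.1 ord0 = u n.+1 & S.1 ord_max = u n].

Section Step.
Variables (a b : FF).
Let u := us d c a b.
Hypothesis unz : forall n, u n != 0.

Lemma u_fwd n : u n.+2 = (u n.+1 ^+ Ef d c n.+1 + 1) / u n.
Proof. exact: usSS. Qed.
Lemma u_bwd n : u n = (u n.+1 ^+ Ef d c n.+1 + 1) / u n.+2.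
Proof.
have h := u_fwd n; have n2 := unz n.+2; have n0 := unz n.
have e : u n.+2 * u n = u n.+1 ^+ Ef d c n.+1 + 1.
  by rewrite h -mulrA (mulVf n0) mulr1.
apply: (mulfI n2); by rewrite e mulrCA (mulfV n2) mulr1.
Qed.

Lemma Inv_step sg S n k : Inv_at u sg S n -> ~ (n = 0%N /\ k = ord_max) ->
  exists m, Inv_at u sg (mutate k S) m.
Proof.
rewrite /Inv_at /mutate /=; case: (ord2P k) => -> {k}.
- case o: (odd n) => /= -[e2 e0 e1] _.
  +
    case: n o e0 e1 => [//|m] /= om e0 e1; exists m; rewrite ifT ?om //.
    split; first by rewrite e2 mut_mxB negbK.
    * by rewrite e2 mut_cl0 e0 e1 (u_bwd m) /Ef /= om mulrC.
    * by rewrite mut_cl_other // e1.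
  + exists n.+1; rewrite /= o /=; split; first by rewrite e2 mut_mxB.
    * by rewrite e2 mut_cl0 e0 e1 u_fwd /Ef /= o mulrC.
    * by rewrite mut_cl_other // e1.
- case o: (odd n) => /= -[e2 e0 e1] hn.
  + exists n.+1; rewrite /= o /=; split; first by rewrite e2 mut_mxB negbK.
    * by rewrite mut_cl_other // e0.
    * by rewrite e2 mut_cl1 e0 e1 u_fwd /Ef /= o mulrC.
  + case: n o e0 e1 hn => [|[|m]] //= om e0 e1 hn; first by exfalso; apply: hn.
    exists m.+1; rewrite /= ifF; last by move: om; case: (odd m).
    split; first by rewrite e2 mut_mxB.
    * by rewrite mut_cl_other // e0.
    * rewrite e2 mut_cl1 e0 e1 (u_bwd m.+1) /Ef /=.
      by move: om; case: (odd m) => //= _; rewrite mulrC.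
Qed.
End Step.

Variable x : 'I_2 -> FF.
Let x1 := x ord0.
Let x2 := x ord_max.
Definition x1' := x1^-1 * (x2 ^+ d + 1).
Definition x2' := x2^-1 * (x1 ^+ c + 1).
Definition uF := us d c x1 x2.
Definition uB := us d c x1' x2.
Hypothesis uFnz : forall n, uF n != 0.
Hypothesis uBnz : forall n, uB n != 0.
Hypothesis x1nz : x1 != 0.

Lemma uB2 : uB 2 = x1.
Proof.
rewrite /uB usSS us1 us0 /Ef /=.
have h := uBnz 0; rewrite /uB us0 /x1' in h.
have h2 : x2 ^+ d + 1 != 0 by apply: contraNneq h => ->; rewrite mulr0.
by rewrite /x1' invfM invrK mulrCA (mulfV h2) mulr1.
Qed.

Definition Reach (S : seed) := (exists n, Inv_at uF true S n) \/ (exists n, Inv_at uB false S n).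

Lemma Reach0 : Reach (x, B).
Proof. by left; exists 0%N; rewrite /Inv_at /=. Qed.

Lemma uF2 : uF 2 = x1'. Proof. by rewrite /uF usSS /x1' /Ef /= mulrC. Qed.
Lemma uF3 : uF 3 = (x1' ^+ c + 1) / x2. Proof. by rewrite /uF usSS -/uF uF2 /Ef /=. Qed.
Lemma uB3 : uB 3 = (x1 ^+ c + 1) / x2. Proof. by rewrite /uB usSS -/uB uB2 /Ef /=. Qed.

Lemma Reach_mut S k : Reach S -> Reach (mutate k S).
Proof.
case=> -[n h].
- have [[? ?]|nn] : (n = 0%N /\ k = ord_max) \/ ~ (n = 0%N /\ k = ord_max).
    by case: n h => [|n] h; case: (ord2P k) => ->; [right; case|left|right; case|right; case].
  + subst n k; right; exists 2%N.
    have [e2 e0 e1] : [/\ S.2 = Msg true, S.1 ord0 = uF 0 & S.1 ord_max = uF 1] := h.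
    rewrite /Inv_at /=.
    split; first by rewrite /mutate /= e2 mut_mxB.
    * by rewrite /mutate /= mut_cl_other // e0 uB2.
    * by rewrite /mutate /= e2 mut_cl1 e0 e1 uB3 mulrC.
  + by have [m hm] := Inv_step uFnz h nn; left; exists m.
- have [[? ?]|nn] : (n = 0%N /\ k = ord_max) \/ ~ (n = 0%N /\ k = ord_max).
    by case: n h => [|n] h; case: (ord2P k) => ->; [right; case|left|right; case|right; case].
  + subst n k; left; exists 2%N.
    have [e2 e0 e1] : [/\ S.2 = Msg false, S.1 ord0 = uB 0 & S.1 ord_max = uB 1] := h.
    rewrite /Inv_at /=.
    split; first by rewrite /mutate /= e2 mut_mxB.
    * by rewrite /mutate /= mut_cl_other // e0 uF2.
    * by rewrite /mutate /= e2 mut_cl1 e0 e1 uF3 mulrC.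
  + by have [m hm] := Inv_step uBnz h nn; right; exists m.
Qed.

Lemma Reach_seq ks : Reach (mutseq ks (x, B)).
Proof.
elim/last_ind: ks => [|ks k ih]; first exact: Reach0.
by rewrite /mutseq foldl_rcons; apply: Reach_mut.
Qed.

Lemma cluster_var_seq y : cluster_var x B y -> exists n, y = uF n \/ y = uB n.
Proof.
move=> [ks [i ->]].
have : Reach (mutseq ks (x, B)) by apply: Reach_seq.
case=> -[n]; rewrite /Inv_at; case: (odd n) => /= -[_ e0 e1];
  case: (ord2P i) => ->; rewrite ?e0 ?e1; by eauto.
Qed.
End Seeds.

Lemma us_rel eo ee a b n : us eo ee a b n != 0 ->
  us eo ee a b n * us eo ee a b n.+2 = us eo ee a b n.+1 ^+ Ef eo ee n.+1 + 1.
Proof. by move=> h; rewrite usSS mulrC -mulrA mulVf // mulr1. Qed.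

Section Main.
Variables (c d : nat) (hc : (1 <= c)%N) (hd : (2 <= d)%N) (x : 'I_2 -> FF).
Hypothesis hx : alg_indep x.
Let x1 := x ord0.
Let x2 := x ord_max.
Let B := Bcd c d.
Let hy : forall P, P != 0 -> eval2 P x1 x2 != 0 := hx.

Let Vp := vrel x1 x2 idfun 1 1.
Let hVp : goodV Vp := good_pt hy 1 1.
Definition Pos f := exists v, Vp f v /\ 0 < v.

Lemma Pos_us eo ee a b : Pos a -> Pos b -> forall n, Pos (us eo ee a b n).
Proof.
move=> pa pb.
suff h : forall n, Pos (us eo ee a b n) /\ Pos (us eo ee a b n.+1) by move=> n; case: (h n).
elim=> [|n [[v0 [h0 p0]] [v1 [h1 p1]]]]; first by split.
split; first by exists v1.
exists ((v1 ^+ Ef eo ee n.+1 + 1) / v0); split.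
  rewrite usSS; apply: (gv_mul hVp); last by apply: (gv_inv hVp) => //; rewrite gt_eqF.
  by apply: (gv_add hVp); [apply: (gv_exp hVp) | apply: (gv_one hVp)].
by rewrite divr_gt0 // addr_gt0 // exprn_gt0.
Qed.

Lemma Pos_nz f : Pos f -> f != 0.
Proof. by move=> [v [h p]]; apply: (gv_nz hVp h); rewrite gt_eqF. Qed.

Lemma Pos_x1 : Pos x1. Proof. by exists 1; split; [apply: vrel_y1 | apply: ltr01]. Qed.
Lemma Pos_x2 : Pos x2. Proof. by exists 1; split; [apply: vrel_y2 | apply: ltr01]. Qed.
Lemma Pos_x1' : Pos (x1' d x).
Proof.
exists (1^-1 * (1 ^+ d + 1)); split.
  apply: (gv_mul hVp); first by apply: (gv_inv hVp); [apply: vrel_y1 | apply: oner_neq0].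
  by apply: (gv_add hVp); [apply: (gv_exp hVp); apply: vrel_y2 | apply: (gv_one hVp)].
by rewrite invr1 mul1r expr1n addr_gt0 // ltr01.
Qed.
Lemma Pos_x2' : Pos (x2' c x).
Proof.
exists (1^-1 * (1 ^+ c + 1)); split.
  apply: (gv_mul hVp); first by apply: (gv_inv hVp); [apply: vrel_y2 | apply: oner_neq0].
  by apply: (gv_add hVp); [apply: (gv_exp hVp); apply: vrel_y1 | apply: (gv_one hVp)].
by rewrite invr1 mul1r expr1n addr_gt0 // ltr01.
Qed.

Lemma uFnz n : uF c d x n != 0.
Proof. by apply: Pos_nz; apply: Pos_us; [apply: Pos_x1 | apply: Pos_x2]. Qed.
Lemma uBnz n : uB c d x n != 0.
Proof. by apply: Pos_nz; apply: Pos_us; [apply: Pos_x1' | apply: Pos_x2]. Qed.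
Lemma x1nz : x1 != 0. Proof. exact: Pos_nz Pos_x1. Qed.
Lemma x2nz : x2 != 0. Proof. exact: Pos_nz Pos_x2. Qed.
Lemma x1'nz : x1' d x != 0. Proof. exact: Pos_nz Pos_x1'. Qed.
Lemma x2'nz : x2' c x != 0. Proof. exact: Pos_nz Pos_x2'. Qed.

Definition uF' n := if n is n'.+1 then uF c d x n' else x2' c x.

Lemma uF'_rel n : uF' n * uF' n.+2 = uF' n.+1 ^+ Ef c d n.+1 + 1.
Proof.
case: n => [|m] /=.
  rewrite /uF us1 /x2' /Ef /= mulrC mulrA mulfV ?mul1r //; exact: x2nz.
rewrite /uF us_rel; last exact: uFnz.
by rewrite /Ef /=; case: (odd m).
Qed.

Lemma uF'nz n : uF' n != 0.
Proof. case: n => [|n] /=; [exact: x2'nz | exact: uFnz]. Qed.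

Section DomAll.
Variables (V : FF -> CC -> Prop) (hV : goodV V).
Hypotheses (d1 : dom V x1) (d2 : dom V x2) (d1' : dom V (x1' d x)) (d2' : dom V (x2' c x)).

Lemma dom_uB n : dom V (uB c d x n).
Proof.
have Eper : forall n, Ef d c n.+2 = Ef d c n by move=> k; rewrite /Ef /= negbK.
have Epos : forall n, (0 < Ef d c n)%N by move=> k; rewrite /Ef; case: (odd k) => //; apply: ltnW.
apply: (local_all hV (uBnz) _ Eper Epos) => //.
- by move=> k; apply: us_rel; apply: uBnz.
- by rewrite uB2 //; apply: uBnz.
- rewrite uB3; last exact: uBnz.
  by rewrite mulrC; exact: d2'.
Qed.

Lemma dom_uF n : dom V (uF c d x n).
Proof.
have Eper : forall n, Ef c d n.+2 = Ef c d n by move=> k; rewrite /Ef /= negbK.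
have Epos : forall n, (0 < Ef c d n)%N by move=> k; rewrite /Ef; case: (odd k) => //; apply: ltnW.
have h : dom V (uF' n.+1).
  apply: (local_all hV uF'nz uF'_rel Eper Epos) => //.
  by rewrite /= uF2.
by [].
Qed.

Lemma dom_A y : cluster_alg x B y -> dom V y.
Proof.
elim=> [c0|y0 hy0|y0 z0 _ h1 _ h2|y0 z0 _ h1 _ h2].
- exact: dom_cst.
- have [n [->|->]] := cluster_var_seq hc hd (uFnz) (uBnz) hy0; [exact: dom_uF | exact: dom_uB].
- exact: dom_add.
- exact: dom_mul.
Qed.
End DomAll.
End Main.

Lemma poly_zero_all (r : {poly CC}) : (forall a, r.[a] = 0) -> r = 0.
Proof.
move=> h; apply/eqP; apply/negPn/negP => r0.
set rs := [seq (i%:R : CC) | i <- iota 0 (size r)].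
have A : all (root r) rs by apply/allP => z /mapP [i _ ->]; apply/rootP; apply: h.
have U : uniq rs.
  rewrite map_inj_uniq ?iota_uniq // => i j /eqP; rewrite eqr_nat => /eqP.
  by [].
by have := max_poly_roots r0 A U; rewrite size_map size_iota ltnn.
Qed.

Lemma poly_zero_ae (r g : {poly CC}) : g != 0 -> (forall a, g.[a] != 0 -> r.[a] = 0) -> r = 0.
Proof.
move=> g0 h; have : r * g = 0.
  apply: poly_zero_all => a; rewrite hornerM.
  by have [ga|ga] := eqVneq g.[a] 0; [rewrite ga mulr0 | rewrite h // mul0r].
by move/eqP; rewrite mulf_eq0 (negPf g0) orbF => /eqP.
Qed.

Lemma monoroot (f : {poly CC}) : f != 0 -> (forall r, r != 0 -> f.[r] != 0) ->
  exists c n, c != 0 /\ f = c%:P * 'X^n.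
Proof.
move=> f0 h; have [rs e] := closed_field_poly_normal f.
exists (lead_coef f), (size rs); split; first by rewrite lead_coef_eq0.
have rs0 : forall z, z \in rs -> z = 0.
  move=> z zin; apply/eqP; apply/negPn/negP => /h; rewrite e hornerZ horner_prod.
  rewrite (big_rem z) //= hornerXsubC subrr mul0r mulr0 eqxx //.
rewrite {1}e -mul_polyC; congr (_ * _).
rewrite (eq_big_seq (fun _ => 'X)); last by move=> z /rs0 ->; rewrite subr0.
elim: (rs) => [|z s ih]; first by rewrite big_nil expr0.
by rewrite big_cons ih exprS.
Qed.

Lemma L1 (p q : {poly CC}) : p != 0 -> q != 0 ->
  (forall b, b != 0 -> exists p' q' : {poly CC}, [/\ p'.[b] != 0, q'.[b] != 0 & p * q' = p' * q]) ->
  exists (l : CC) (i j : nat), l != 0 /\ p * 'X^i = l%:P * q * 'X^j.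
Proof.
move=> p0 q0 h.
set g := gcdp p q.
have g0 : g != 0 by rewrite gcdp_eq0 negb_and p0.
set p1 := p %/ g; set q1 := q %/ g.
have ep : p = p1 * g by rewrite divpK // dvdp_gcdl.
have eq : q = q1 * g by rewrite divpK // dvdp_gcdr.
have cop : coprimep p1 q1 by apply: coprimep_div_gcd; rewrite p0.
have key : forall r, r != 0 -> exists p' q' : {poly CC},
    [/\ p'.[r] != 0, q'.[r] != 0 & p1.[r] * q'.[r] = p'.[r] * q1.[r]].
  move=> r r0; have [p' [q' [h1 h2 h3]]] := h r r0; exists p', q'; split => //.
  have : p1 * q' = p' * q1.
    apply: (mulIf g0); by rewrite -mulrA (mulrC q') mulrA -ep h3 eq mulrA.
  by move/(congr1 (horner^~ r)); rewrite !hornerM.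
have hq1 : forall r, r != 0 -> q1.[r] != 0.
  move=> r r0; have [p' [q' [h1 h2 h3]]] := key r r0.
  apply/negP => /eqP q1r; move: h3; rewrite q1r mulr0 => /eqP; rewrite mulf_eq0 (negPf h2) orbF.
  by move=> /(coprimep_root cop); rewrite q1r eqxx.
have hp1 : forall r, r != 0 -> p1.[r] != 0.
  move=> r r0; have [p' [q' [h1 h2 h3]]] := key r r0.
  apply/negP => /eqP p1r; move: h3; rewrite p1r mul0r => /esym/eqP.
  by rewrite mulf_eq0 (negPf h1) (negPf (hq1 r r0)).
have p10 : p1 != 0 by apply: contraNneq p0 => e; rewrite ep e mul0r.
have q10 : q1 != 0 by apply: contraNneq q0 => e; rewrite eq e mul0r.
have [a [m [a0 e1]]] := monoroot p10 hp1.
have [b [k [b0 e2]]] := monoroot q10 hq1.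
exists (a / b), k, m; split; first by rewrite mulf_neq0 ?invr_eq0.
have ab : (a / b)%:P * b%:P = a%:P by rewrite -polyCM mulfVK.
by rewrite ep eq e1 e2 -[in LHS]ab; ring.
Qed.

Lemma L1' (p q : {poly CC}) : p != 0 -> q != 0 ->
  (forall b, b != 0 -> exists p' q' : {poly CC}, [/\ p'.[b] != 0, q'.[b] != 0 & p * q' = p' * q]) ->
  p * (lead_coef q)%:P * 'X^(size q) = (lead_coef p)%:P * q * 'X^(size p).
Proof.
move=> p0 q0 h; have [l [i [j [l0 e]]]] := L1 p0 q0 h.
have Xi0 : ('X^i : {poly CC}) != 0 by rewrite monic_neq0 // monicXn.
have hlc : lead_coef p = l * lead_coef q.
  have := congr1 lead_coef e.
  by rewrite !lead_coefM !lead_coefXn lead_coefC !mulr1.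
have hs : (i + size p = j + size q)%N.
  have := congr1 (fun r : {poly CC} => size r) e.
  by rewrite !size_mulXn // ?size_Cmul // mulf_neq0 // polyC_eq0.
apply: (mulIf Xi0).
have -> : p * (lead_coef q)%:P * 'X^(size q) * 'X^i = (p * 'X^i) * (lead_coef q)%:P * 'X^(size q).
  by ring.
have eX : ('X^(size p) * 'X^i : {poly CC}) = 'X^j * 'X^(size q) by rewrite -!exprD addnC hs.
rewrite e hlc polyCM.
transitivity ((l%:P * (lead_coef q)%:P) * q * ('X^j * 'X^(size q))); first by ring.
by rewrite -eX; ring.
Qed.

Definition sl (a : CC) : {rmorphism {poly {poly CC}} -> {poly CC}} := map_poly (horner_eval a).

Lemma slC a c : sl a c%:P = (c.[a])%:P. Proof. by rewrite /sl /= map_polyC. Qed.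
Lemma slXn a n : sl a 'X^n = 'X^n. Proof. by rewrite /sl /= map_polyXn. Qed.

Lemma peE a b P : ev idfun a b P = (sl a P).[b].
Proof.
rewrite /ev /sl /= /horner_eval /=; congr horner; apply: eq_map_poly => q /=.
by rewrite map_poly_id.
Qed.

Lemma pe_outer a b P : (P.[b%:P]).[a] = ev idfun a b P.
Proof.
rewrite peE; have := horner_map (horner_eval a) P (b%:P).
by rewrite /= /horner_eval /= hornerC => ->.
Qed.

Section Mono.
Variables (y1 y2 : FF).
Hypothesis hy : forall P, P != 0 -> eval2 P y1 y2 != 0.
Local Notation E := (ev cstm y1 y2).
Local Notation pe := (ev idfun).

Lemma Enz P : P != 0 -> E P != 0. Proof. by move=> /hy; rewrite eval2E. Qed.

Lemma stepA (k : FF) P Q : P != 0 -> Q != 0 -> k * E Q = E P ->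
  (forall a b, a != 0 -> b != 0 -> exists P' Q', [/\ pe a b P' != 0, pe a b Q' != 0 & k * E Q' = E P']) ->
  P * (lead_coef Q)%:P * 'X^(size Q) = (lead_coef P)%:P * Q * 'X^(size P).
Proof.
move=> P0 Q0 hk hloc; apply/eqP; rewrite -subr_eq0; apply/eqP.
set D := _ - _.
have lP0 : lead_coef P != 0 by rewrite lead_coef_eq0.
have lQ0 : lead_coef Q != 0 by rewrite lead_coef_eq0.
have g0 : ('X * lead_coef P * lead_coef Q : {poly CC}) != 0.
  by rewrite !mulf_neq0 // polyX_eq0.
apply/polyP => n; rewrite coef0; apply: (poly_zero_ae g0) => a.
rewrite !hornerM hornerX !mulf_eq0 !negb_or => /andP[/andP[a0 pa] qa].
set p := sl a P; set q := sl a Q.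
have lp : lead_coef p = (lead_coef P).[a] by rewrite lead_coef_map_eq.
have lq : lead_coef q = (lead_coef Q).[a] by rewrite lead_coef_map_eq.
have sp : size p = size P by rewrite size_map_poly_id0.
have sq : size q = size Q by rewrite size_map_poly_id0.
have p0 : p != 0 by rewrite -lead_coef_eq0 lp.
have q0 : q != 0 by rewrite -lead_coef_eq0 lq.
have H := L1' p0 q0.
have : sl a D = 0.
  rewrite /D rmorphB !rmorphM !slC !slXn -/p -/q -lp -lq -sp -sq H; last first.
    move=> b b0; have [P' [Q' [h1 h2 h3]]] := hloc a b a0 b0.
    exists (sl a P'), (sl a Q'); rewrite -!peE; split => //.
    rewrite -!rmorphM; congr (sl a _); apply/eqP; rewrite -subr_eq0; apply/eqP.
    apply: (Einj hy); rewrite rmorphB !rmorphM -hk -h3; ring.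
  by rewrite subrr.
by move/(congr1 (fun r : {poly CC} => r`_n)); rewrite coef_map /= coef0.
Qed.

Lemma monomial (k : FF) :
  (forall a b, a != 0 -> b != 0 -> exists v, v != 0 /\ vrel y1 y2 idfun a b k v) ->
  exists (l : CC) (i j i' j' : nat), l != 0 /\ k * y1 ^+ i * y2 ^+ j = cst l * y1 ^+ i' * y2 ^+ j'.
Proof.
move=> hv.
have hloc : forall a b, a != 0 -> b != 0 -> exists P' Q',
    [/\ pe a b P' != 0, pe a b Q' != 0 & k * E Q' = E P'].
  move=> a b a0 b0; have [v [v0 [P' [Q' [h1 [h2 h3]]]]]] := hv a b a0 b0.
  exists P', Q'; split => //; apply: contraNneq v0 => e; by rewrite h3 e mul0r.
have [P [Q [h1 h2 h3]]] := hloc 1 1 (oner_neq0 _) (oner_neq0 _).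
have P0 : P != 0 by apply: contraNneq h1 => ->; rewrite rmorph0.
have Q0 : Q != 0 by apply: contraNneq h2 => ->; rewrite rmorph0.
have I := stepA P0 Q0 h3 hloc.
set lP := lead_coef P; set lQ := lead_coef Q.
have lP0 : lP != 0 by rewrite lead_coef_eq0.
have lQ0 : lQ != 0 by rewrite lead_coef_eq0.
set cp := E lP%:P; set cq := E lQ%:P.
have cq0 : cq != 0 by apply: Enz; rewrite polyC_eq0.
have EQ0 : E Q != 0 by apply: Enz.
have K1 : k * cq * y2 ^+ size Q = cp * y2 ^+ size P.
  apply: (mulIf EQ0); have := congr1 E I; rewrite !rmorphM !rmorphXn evX -h3 -/cp -/cq => e.
  transitivity (k * E Q * cq * y2 ^+ size Q); first by ring.
  by rewrite e; ring.
have hL1 : forall b, b != 0 -> exists p' q' : {poly CC},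
    [/\ p'.[b] != 0, q'.[b] != 0 & lP * q' = p' * lQ].
  move=> b b0; have [P' [Q' [e1 e2 e3]]] := hloc b 1 b0 (oner_neq0 _).
  exists (P'.[1%:P]), (Q'.[1%:P]); rewrite !pe_outer.
  split => //.
  have J : P' * lQ%:P * 'X^(size Q) = Q' * lP%:P * 'X^(size P).
    apply/eqP; rewrite -subr_eq0; apply/eqP; apply: (Einj hy).
    rewrite rmorphB !rmorphM !rmorphXn evX -/cp -/cq -e3.
    transitivity (E Q' * (k * cq * y2 ^+ size Q) - E Q' * cp * y2 ^+ size P); first by ring.
    by rewrite K1; ring.
  have := congr1 (fun r : {poly {poly CC}} => r.[1%:P]) J.
  rewrite !hornerE polyC1 !expr1n !mulr1 => e4.
  by rewrite mulrC e4 mulrC.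
have [l [i [j [l0 e]]]] := L1 lP0 lQ0 hL1.
have e' : cp * y1 ^+ i = cst l * cq * y1 ^+ j.
  have := congr1 (fun r : {poly CC} => E r%:P) e.
  by rewrite !rmorphM !rmorphXn !evY1 evC cstmE.
exists l, i, (size Q), j, (size P); split => //.
apply: (mulIf cq0).
transitivity ((k * cq * y2 ^+ size Q) * y1 ^+ i); first by ring.
rewrite K1; transitivity ((cp * y1 ^+ i) * y2 ^+ size P); first by ring.
by rewrite e'; ring.
Qed.
End Mono.

Lemma Xn1_roots n : (0 < n)%N ->
  exists rs : seq CC, 'X^n + 1 = \prod_(z <- rs) ('X - z%:P) /\ size rs = n.
Proof.
move=> n0; have [rs e] := closed_field_poly_normal ('X^n + 1 : {poly CC}).
have lc : lead_coef ('X^n + 1 : {poly CC}) = 1 by rewrite -polyC1 lead_coefXnaddC.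
rewrite lc scale1r in e; exists rs; split => //.
have := congr1 (fun r : {poly CC} => size r) e.
by rewrite size_prod_XsubC -polyC1 size_XnaddC // => -[].
Qed.

Lemma root_prod (z : CC) rs : z \in rs -> (\prod_(w <- rs) ('X - w%:P)).[z] = 0.
Proof.
move=> zin; rewrite horner_prod (big_rem z) //= hornerXsubC subrr mul0r //.
Qed.

Lemma root_neg1 n : (0 < n)%N -> exists z : CC, z ^+ n = -1.
Proof.
move=> n0; have [rs [e s]] := Xn1_roots n0.
case: rs e s => [|z rs] e s; first by move: n0; rewrite -s.
exists z; apply/eqP; rewrite -subr_eq0 opprK.
have := congr1 (fun r : {poly CC} => r.[z]) e.
rewrite root_prod ?mem_head // !hornerE => ->; by [].
Qed.

Section Roots.
Variables (d : nat) (hd : (2 <= d)%N).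
Lemma roots_setup : exists (z0 z1 : CC) (q : {poly CC}),
  [/\ z0 ^+ d = -1, z1 ^+ d = -1, 'X^d + 1 = ('X - z0%:P) * q,
      q.[z0] != 0 & q.[z1] = 0 /\ q.[0] != 0].
Proof.
have d0 : (0 < d)%N by apply: ltnW.
have [rs [e s]] := Xn1_roots d0.
case: rs e s => [|z0 [|z1 rs]] e s; [by move: hd; rewrite -s | by move: hd; rewrite -s|].
have rootof : forall z, z \in [:: z0, z1 & rs] -> z ^+ d = -1.
  move=> z zin; apply/eqP; rewrite -subr_eq0 opprK.
  have := congr1 (fun r : {poly CC} => r.[z]) e.
  by rewrite root_prod // !hornerE => ->.
set q := \prod_(w <- z1 :: rs) ('X - w%:P).
have e' : 'X^d + 1 = ('X - z0%:P) * q by rewrite e big_cons.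
exists z0, z1, q.
have hz0 : z0 ^+ d = -1 by apply: rootof; rewrite mem_head.
split => //.
- by apply: rootof; rewrite !inE eqxx orbT.
-
  pose S := \sum_(i < d) 'X ^+ (d.-1 - i) * (z0%:P) ^+ i.
  have eS : 'X^d + 1 = ('X - z0%:P) * S.
    have h1 : (z0%:P) ^+ d = -1 :> {poly CC} by rewrite -rmorphXn /= hz0 rmorphN rmorph1.
    by rewrite -subrXX h1 opprK.
  have qS : q = S by apply: (mulfI (negbT (polyXsubC_eq0 z0))); rewrite -e' -eS.
  have z00 : z0 != 0.
    apply/negP => /eqP z0e; move: hz0; rewrite z0e expr0n eqn0Ngt (ltnW hd) /= => /eqP.
    by rewrite eq_sym oppr_eq0 oner_eq0.
  rewrite qS horner_sum.
  have -> : \sum_(i < d) ('X ^+ (d.-1 - i) * z0%:P ^+ i).[z0] = \sum_(i < d) z0 ^+ d.-1.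
    apply: eq_bigr => i _; rewrite hornerM hornerXn -rmorphXn hornerC -exprD subnK //.
    by rewrite -ltnS prednK // ltnW.
  by rewrite sumr_const card_ord mulrn_eq0 negb_or expf_eq0 (negPf z00) andbF -lt0n (ltnW hd).
- split.
  + by rewrite horner_prod big_cons /= hornerXsubC subrr mul0r.
  + have := congr1 (fun r : {poly CC} => r.[0]) e'.
    rewrite !hornerE expr0n eqn0Ngt (ltnW hd) /= add0r => e0.
    by apply/negP => /eqP h0; move: e0; rewrite h0 mulr0 => /eqP; rewrite oner_eq0.
Qed.
End Roots.

Section UFD.
Variables (A : FF -> Prop) (A1 : A 1) (AM : forall a b, A a -> A b -> A (a * b)).

Lemma unit_inv u : unitA A u -> [/\ A u, u != 0 & A u^-1].
Proof.
move=> [Au [b [Ab e]]].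
have u0 : u != 0.
  apply/negP => /eqP u0; move: e; rewrite u0 mul0r => /eqP; rewrite eq_sym oner_eq0; by [].
split; [exact: Au | exact: u0 |].
suff -> : u^-1 = b by exact: Ab.
by rewrite -[u^-1]mulr1 -e mulrA (mulVf u0) mul1r.
Qed.

Lemma unit1 : unitA A 1.
Proof. split; first exact: A1. by exists 1; split; [exact: A1 | rewrite mulr1]. Qed.

Lemma unitM u v : unitA A u -> unitA A v -> unitA A (u * v).
Proof.
move=> hu hv; have [Au u0 Aui] := unit_inv hu; have [Av v0 Avi] := unit_inv hv.
split; first exact: AM.
exists (u^-1 * v^-1); split; first exact: AM.
by rewrite mulrACA (mulfV u0) (mulfV v0) mulr1.
Qed.

Lemma unitV u : unitA A u -> unitA A u^-1.
Proof.
move=> hu; have [Au u0 Aui] := unit_inv hu; split; first exact: Aui.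
by exists u; split; [exact: Au | rewrite (mulVf u0)].
Qed.

Lemma irred_unitM u y : unitA A u -> irredA A y -> irredA A (u * y).
Proof.
move=> hu [Ay y0 ny hy]; have [Au u0 Aui] := unit_inv hu.
split.
- exact: AM.
- exact: mulf_neq0 u0 y0.
- move=> h; apply: ny; have := unitM (unitV hu) h.
  by rewrite mulrA (mulVf u0) mul1r.
- move=> b c0 Ab Ac e.
  have e' : y = (u^-1 * b) * c0 by rewrite -mulrA -e mulrA (mulVf u0) mul1r.
  case: (hy _ _ (AM Aui Ab) Ac e') => [h|h]; last by right.
  left; have := unitM hu h; by rewrite mulrA (mulfV u0) mul1r.
Qed.

Lemma A_prod (s : seq FF) : (forall y, y \in s -> A y) -> A (\prod_(y <- s) y).
Proof.
elim: s => [|z s ih] h; first by rewrite big_nil; exact: A1.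
rewrite big_cons; apply: AM; first by apply: h; rewrite mem_head.
by apply: ih => y ys; apply: h; rewrite inE ys orbT.
Qed.

Lemma irr_A (s : seq FF) : (forall y, y \in s -> irredA A y) -> forall y, y \in s -> A y.
Proof. by move=> h y /h []. Qed.

Lemma fac_any : factorial_ring A -> forall a, A a -> a != 0 ->
  exists u (s : seq FF), [/\ unitA A u, (forall y, y \in s -> irredA A y) & a = u * \prod_(y <- s) y].
Proof.
move=> [Ex _] a Aa a0.
case: (Classical_Prop.classic (unitA A a)) => h.
  exists a, [::]; split; [exact: h | by [] | by rewrite big_nil mulr1].
have [s [hs e]] := Ex a Aa a0 h.
by exists 1, s; split; [apply: unit1 | exact: hs | rewrite mul1r].
Qed.

Lemma prod_rem (y : FF) (s : seq FF) : y \in s -> \prod_(z <- s) z = y * \prod_(z <- rem y s) z.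
Proof. by move=> ys; rewrite (big_rem y ys). Qed.

Lemma ufd_split : factorial_ring A -> forall a1 a2 b1 b2, A a1 -> A a2 -> A b1 -> A b2 ->
  a1 != 0 -> ~ unitA A a1 -> a2 != 0 -> b1 != 0 -> ~ unitA A b1 -> b2 != 0 ->
  a1 * a2 = b1 * b2 ->
  exists k w g, [/\ irredA A k, A w, A g, k * w = a1 & k * g = b1 \/ k * g = b2].
Proof.
move=> fA a1 a2 b1 b2 Aa1 Aa2 Ab1 Ab2 a10 na1 a20 b10 nb1 b20 e.
have [Ex Un] := fA.
have [K [hK eK]] := Ex a1 Aa1 a10 na1.
case: K hK eK => [|k K'] hK eK.
  by exfalso; apply: na1; rewrite eK big_nil; exact: unit1.
have [S [hS eS]] := Ex b1 Ab1 b10 nb1.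
case: S hS eS => [|s0 S'] hS eS.
  by exfalso; apply: nb1; rewrite eS big_nil; exact: unit1.
have [u2 [R [hu2 hR eR]]] := fac_any fA Aa2 a20.
have [u4 [T [hu4 hT eT]]] := fac_any fA Ab2 b20.
have [Au2 u20 Au2i] := unit_inv hu2.
have [Au4 u40 Au4i] := unit_inv hu4.
set v := u4 * u2^-1.
have hv : unitA A v by apply: unitM => //; apply: unitV.
have [Av v0 Avi] := unit_inv hv.
set t := (v * s0) :: S' ++ T.
have ht : forall y, y \in t -> irredA A y.
  move=> y; rewrite /t in_cons mem_cat => /orP[/eqP ye|/orP[h|h]].
  - rewrite ye; apply: (irred_unitM hv); apply: hS; exact: mem_head.
  - apply: hS; rewrite in_cons h; exact: orbT.
  - exact: hT h.
have hs : forall y, y \in (k :: K') ++ R -> irredA A y.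
  move=> y; rewrite mem_cat => /orP[h|h]; [exact: hK h | exact: hR h].
have E3 : b1 = s0 * \prod_(y <- S') y by rewrite eS big_cons.
have ep : \prod_(y <- (k :: K') ++ R) y = \prod_(y <- t) y.
  have E1 : \prod_(y <- (k :: K') ++ R) y = a1 * \prod_(y <- R) y.
    rewrite big_cat -eK; reflexivity.
  have E2 : \prod_(y <- t) y = v * s0 * (\prod_(y <- S') y * \prod_(y <- T) y).
    rewrite /t big_cons big_cat mulrA; reflexivity.
  rewrite E1 E2.
  apply: (mulfI u20).
  transitivity (a1 * a2); first by rewrite eR; ring.
  have vu : u2 * v = u4 by rewrite /v mulrCA (mulfV u20) mulr1.
  have -> : u2 * (v * s0 * (\prod_(y <- S') y * \prod_(y <- T) y))
          = u4 * (s0 * (\prod_(y <- S') y * \prod_(y <- T) y)) by rewrite -vu; ring.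
  rewrite e eT E3; ring.
have [t' [pt st ha]] := Un _ _ hs ht ep.
have := ha 0%N; rewrite /= => /(_ isT) [u [hu ek]].
have [Au u0 Aui] := unit_inv hu.
set y := nth 0 t' 0 in ek.
have yt : y \in t.
  rewrite (perm_mem pt) /y; apply: mem_nth; rewrite -st; exact: isT.
have AK' : A (\prod_(z <- K') z).
  apply: A_prod => z zK; apply: (irr_A hK); rewrite in_cons zK; exact: orbT.
exists k, (\prod_(z <- K') z); move: yt; rewrite inE mem_cat orbA => /orP[h|h].
- have hyL : y \in (v * s0) :: S' by rewrite in_cons.
  have eL : \prod_(z <- (v * s0) :: S') z = v * b1.
    rewrite big_cons E3 mulrA; reflexivity.
  set r := \prod_(z <- rem y ((v * s0) :: S')) z.
  have Ar : A r.
    apply: A_prod => z /mem_rem zin; apply: (irr_A ht); move: zin.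
    rewrite in_cons => /orP[zz|zz]; rewrite /t in_cons mem_cat; apply/orP; [by left | right].
    by apply/orP; left.
  exists (u^-1 * r * v^-1); split.
  + apply: hK; exact: mem_head.
  + exact: AK'.
  + by apply: AM; [apply: AM|].
  + by rewrite eK big_cons.
  + left; rewrite ek; have := prod_rem hyL; rewrite eL -/r => e2.
    have E : u * y * (u^-1 * r * v^-1) = (u * u^-1) * ((y * r) * v^-1) by ring.
    by rewrite E (mulfV u0) mul1r -e2 mulrAC (mulfV v0) mul1r.
- set r := \prod_(z <- rem y T) z.
  have Ar : A r by apply: A_prod => z /mem_rem zin; apply: (irr_A hT).
  exists (u^-1 * u4 * r); split.
  + apply: hK; exact: mem_head.
  + exact: AK'.
  + by apply: AM; [apply: AM|].
  + by rewrite eK big_cons.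
  + right; rewrite ek eT (prod_rem h) -/r.
    have E : u * y * (u^-1 * u4 * r) = (u * u^-1) * (u4 * (y * r)) by ring.
    by rewrite E (mulfV u0) mul1r.
Qed.
End UFD.

Lemma norm_pow (y a b : FF) i i' : y != 0 -> a * y ^+ i = b * y ^+ i' ->
  a * y ^+ (i - i') = b * y ^+ (i' - i).
Proof.
move=> y0 e; have [le|le] := leqP i i'.
- have e' : a * y ^+ i = (b * y ^+ (i' - i)) * y ^+ i by rewrite e -mulrA -exprD subnK.
  have ae : a = b * y ^+ (i' - i) by apply: (mulIf (expf_neq0 i y0)).
  have -> : (i - i' = 0)%N by apply/eqP; rewrite subn_eq0.
  by rewrite expr0 mulr1.
- have e' : (a * y ^+ (i - i')) * y ^+ i' = b * y ^+ i' by rewrite -e -mulrA -exprD subnK // ltnW.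
  have ae : a * y ^+ (i - i') = b by apply: (mulIf (expf_neq0 i' y0)).
  have -> : (i' - i = 0)%N by apply/eqP; rewrite subn_eq0 ltnW.
  by rewrite expr0 mulr1.
Qed.

Section Final.
Variables (c d : nat) (hc : (1 <= c)%N) (hd : (2 <= d)%N) (x : 'I_2 -> FF).
Hypothesis hx : alg_indep x.
Local Notation x1 := (x ord0).
Local Notation x2 := (x ord_max).
Let hy : forall P, P != 0 -> eval2 P x1 x2 != 0 := hx.
Local Notation A := (cluster_alg x (Bcd c d)).

Lemma A1 : A 1. Proof. rewrite -cst1; exact: ga_cst. Qed.
Lemma AM a b : A a -> A b -> A (a * b). Proof. exact: ga_mul. Qed.
Lemma AD a b : A a -> A b -> A (a + b). Proof. exact: ga_add. Qed.
Lemma Ax1 : A x1. Proof. by apply: ga_gen; exists [::], ord0. Qed.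
Lemma Ax2 : A x2. Proof. by apply: ga_gen; exists [::], ord_max. Qed.
Lemma Ax1' : A (x1' d x).
Proof. apply: ga_gen; exists [:: ord0], ord0; exact: (esym (mut_cl0 c hd x true)). Qed.

Definition hx2 : {rmorphism {poly CC} -> FF} := horner_eval x2 \o map_poly cstm.
Lemma hx2X : hx2 'X = x2. Proof. by rewrite /= map_polyX /horner_eval /= hornerX. Qed.
Lemma hx2C a : hx2 a%:P = cst a. Proof. by rewrite /= map_polyC /horner_eval /= hornerC. Qed.

Lemma A_hx2 p : A (hx2 p).
Proof.
elim/poly_ind: p => [|p a ih]; first by rewrite rmorph0 -cst0; exact: ga_cst.
rewrite rmorphD rmorphM hx2X hx2C; apply: AD; [apply: AM => //; exact: Ax2 | exact: ga_cst].
Qed.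

Lemma V_hx2 V (hV : goodV V) v p : V x2 v -> V (hx2 p) p.[v].
Proof.
move=> h; elim/poly_ind: p => [|p a ih]; first by rewrite rmorph0 horner0; exact: gv_zero.
rewrite rmorphD rmorphM hx2X hx2C !hornerE.
by apply: (gv_add hV); [apply: (gv_mul hV) | apply: (gv_cst hV)].
Qed.

Lemma vrel_exp (F : fieldType) (iota : {rmorphism CC -> F}) a b f v n :
  vrel x1 x2 iota a b f v -> vrel x1 x2 iota a b (f ^+ n) (v ^+ n).
Proof.
move=> h; elim: n => [|n ih]; last by rewrite !exprS; apply: vrel_mul.
rewrite !expr0; have := vrel_cst x1 x2 iota a b 1; by rewrite cst1 rmorph1.
Qed.
Lemma vrel_one (F : fieldType) (iota : {rmorphism CC -> F}) a b : vrel x1 x2 iota a b 1 1.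
Proof. have := vrel_cst x1 x2 iota a b 1; by rewrite cst1 rmorph1. Qed.

Definition Vt a b := vrel x1 x2 idfun a b.
Lemma domt a b : a != 0 -> b != 0 -> forall y, A y -> dom (Vt a b) y.
Proof.
move=> a0 b0 y Ay; have hV := good_pt hy a b.
apply: (dom_A hc hd hx hV) Ay.
- by exists a; apply: vrel_y1.
- by exists b; apply: vrel_y2.
- exists (a^-1 * (b ^+ d + 1)); rewrite /x1'.
  apply: (gv_mul hV); first by apply: (gv_inv hV) => //; apply: vrel_y1.
  by apply: (gv_add hV); [apply: (gv_exp hV); apply: vrel_y2 | apply: (gv_one hV)].
- exists (b^-1 * (a ^+ c + 1)); rewrite /x2'.
  apply: (gv_mul hV); first by apply: (gv_inv hV) => //; apply: vrel_y2.
  by apply: (gv_add hV); [apply: (gv_exp hV); apply: vrel_y1 | apply: (gv_one hV)].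
Qed.

Definition pK (p : {poly CC}) : {fraction {poly CC}} := tofrac p.
Lemma pK_nz (p : {poly CC}) : p.[0] != 0 -> pK p != 0.
Proof. move=> h; rewrite /pK tofrac_eq0; apply: contraNneq h => ->; by rewrite horner0. Qed.

Lemma Vc_one g1 g2 z : Vc x1 x2 g1 g2 z 1 1.
Proof. exists 1; split; first exact: vrel_one. have := val1_tofrac z 1; by rewrite tofrac1 hornerC. Qed.

Lemma curve_x1 g2 z (p : {poly CC}) : Vc x1 x2 (pK p) g2 z x1 p.[z].
Proof. exists (pK p); split; [exact: vrel_y1 | exact: val1_tofrac]. Qed.
Lemma curve_x2 g1 z (p : {poly CC}) : Vc x1 x2 g1 (pK p) z x2 p.[z].
Proof. exists (pK p); split; [exact: vrel_y2 | exact: val1_tofrac]. Qed.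

Let P2 := ('X ^+ d + 1 : {poly CC}).
Let P3 := ('X ^+ c + 1 : {poly CC}).
Lemma P20 : P2.[0] != 0.
Proof. by rewrite /P2 !hornerE expr0n eqn0Ngt (ltnW hd) /= add0r oner_neq0. Qed.
Lemma P30 : P3.[0] != 0.
Proof. by rewrite /P3 !hornerE expr0n eqn0Ngt hc /= add0r oner_neq0. Qed.

Definition G2 z := Vc x1 x2 (pK P2) (pK 'X) z.
Definition G3 z := Vc x1 x2 (pK 'X) (pK P3) z.

Lemma G2_x1' z : G2 z (x1' d x) 1.
Proof.
have g10 := pK_nz P20.
exists 1; split; last by have := val1_tofrac z 1; rewrite tofrac1 hornerC.
have h : vrel x1 x2 iK (pK P2) (pK 'X) (x1' d x) ((pK P2)^-1 * (pK 'X ^+ d + 1)).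
  apply: vrel_mul; first by apply: (vrel_inv hy) => //; apply: vrel_y1.
  by apply: vrel_add; [apply: vrel_exp; apply: vrel_y2 | apply: vrel_one].
suff e : (pK P2)^-1 * (pK 'X ^+ d + 1) = 1 by rewrite -e.
by rewrite /pK -tofracXn -tofrac1 -tofracD -/P2 mulVf.
Qed.

Lemma G3_x2' z : G3 z (x2' c x) 1.
Proof.
have g20 := pK_nz P30.
exists 1; split; last by have := val1_tofrac z 1; rewrite tofrac1 hornerC.
have h : vrel x1 x2 iK (pK 'X) (pK P3) (x2' c x) ((pK P3)^-1 * (pK 'X ^+ c + 1)).
  apply: vrel_mul; first by apply: (vrel_inv hy) => //; apply: vrel_y2.
  by apply: vrel_add; [apply: vrel_exp; apply: vrel_y1 | apply: vrel_one].
suff e : (pK P3)^-1 * (pK 'X ^+ c + 1) = 1 by rewrite -e.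
by rewrite /pK -tofracXn -tofrac1 -tofracD -/P3 mulVf.
Qed.

Lemma domG2 z : z ^+ d = -1 -> forall y, A y -> dom (G2 z) y.
Proof.
move=> hz y Ay; have hV := good_c hy (pK P2) (pK 'X) z.
have z0 : z != 0.
  apply/negP => /eqP z0; move: hz; rewrite z0 expr0n eqn0Ngt (ltnW hd) /= => /eqP.
  by rewrite eq_sym oppr_eq0 oner_eq0.
have hx1 := curve_x1 (pK 'X) z P2.
have hx2' := curve_x2 (pK P2) z 'X; rewrite hornerX in hx2'.
apply: (dom_A hc hd hx hV) Ay.
- by exists P2.[z].
- by exists z.
- by exists 1; apply: G2_x1'.
- exists (z^-1 * (P2.[z] ^+ c + 1)); rewrite /x2'.
  apply: (gv_mul hV); first by apply: (gv_inv hV).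
  by apply: (gv_add hV); [apply: (gv_exp hV) | apply: (gv_one hV)].
Qed.

Lemma domG3 z : z ^+ c = -1 -> forall y, A y -> dom (G3 z) y.
Proof.
move=> hz y Ay; have hV := good_c hy (pK 'X) (pK P3) z.
have z0 : z != 0.
  apply/negP => /eqP z0; move: hz; rewrite z0 expr0n eqn0Ngt hc /= => /eqP.
  by rewrite eq_sym oppr_eq0 oner_eq0.
have hx1' := curve_x1 (pK P3) z 'X; rewrite hornerX in hx1'.
have hx2' := curve_x2 (pK 'X) z P3.
apply: (dom_A hc hd hx hV) Ay.
- by exists z.
- by exists P3.[z].
- exists (z^-1 * (P3.[z] ^+ d + 1)); rewrite /x1'.
  apply: (gv_mul hV); first by apply: (gv_inv hV).
  by apply: (gv_add hV); [apply: (gv_exp hV) | apply: (gv_one hV)].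
- by exists 1; apply: G3_x2'.
Qed.
End Final.

Section Final2.
Variables (c d : nat) (hc : (1 <= c)%N) (hd : (2 <= d)%N) (x : 'I_2 -> FF).
Hypothesis hx : alg_indep x.
Local Notation x1 := (x ord0).
Local Notation x2 := (x ord_max).
Let hy : forall P, P != 0 -> eval2 P x1 x2 != 0 := hx.
Local Notation A := (cluster_alg x (Bcd c d)).

Lemma mono_val V (hV : goodV V) k vk v1 v2 l I J I' J' :
  V k vk -> V x1 v1 -> V x2 v2 ->
  k * x1 ^+ I * x2 ^+ J = cst l * x1 ^+ I' * x2 ^+ J' ->
  vk * v1 ^+ I * v2 ^+ J = l * v1 ^+ I' * v2 ^+ J'.
Proof.
move=> hk h1 h2 e; apply: (gv_uniq hV (f := k * x1 ^+ I * x2 ^+ J)).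
- by apply: (gv_mul hV); [apply: (gv_mul hV) => //|]; apply: (gv_exp hV).
- rewrite e; apply: (gv_mul hV); [apply: (gv_mul hV); [apply: (gv_cst hV)|]|];
  by apply: (gv_exp hV).
Qed.

Lemma zero_pow_cases (vk l z : CC) I J I' J' : vk != 0 -> l != 0 -> z != 0 ->
  (I = 0 \/ I' = 0)%N ->
  vk * 0 ^+ I * z ^+ J = l * 0 ^+ I' * z ^+ J' -> (I = 0 /\ I' = 0)%N.
Proof.
move=> vk0 l0 z0; case: I => [|I]; case: I' => [|I'] hI.
- by [].
- rewrite expr0 exprS !(mul0r, mulr0, mulr1) => /eqP.
  by rewrite mulf_eq0 (negPf vk0) expf_eq0 (negPf z0) andbF.
- rewrite expr0 exprS !(mul0r, mulr0, mulr1) => /eqP.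
  by rewrite eq_sym mulf_eq0 (negPf l0) expf_eq0 (negPf z0) andbF.
- by case: hI.
Qed.

Lemma zero_pow_cases' (vk l a b : CC) J J' : vk != 0 -> l != 0 -> a != 0 -> b != 0 ->
  (J = 0 \/ J' = 0)%N ->
  vk * a * 0 ^+ J = l * b * 0 ^+ J' -> (J = 0 /\ J' = 0)%N.
Proof.
move=> vk0 l0 a0 b0; case: J => [|J]; case: J' => [|J'] hJ.
- by [].
- rewrite expr0 exprS !(mul0r, mulr0, mulr1) => /eqP.
  by rewrite !mulf_eq0 (negPf vk0) (negPf a0).
- rewrite expr0 exprS !(mul0r, mulr0, mulr1) => /eqP.
  by rewrite eq_sym !mulf_eq0 (negPf l0) (negPf b0).
- by case: hJ.
Qed.

Lemma no_kappa k w g (hp : {poly CC}) (zm eta : CC) :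
  A k -> A w -> A g -> k * w = x1 -> k * g = hx2 x hp ->
  zm ^+ d = -1 -> hp.[zm] != 0 -> hp.[0] != 0 -> eta ^+ c = -1 ->
  exists l, l != 0 /\ k = cst l.
Proof.
move=> Ak Aw Ag ekw ekg hzm hpz hp0 heta.
have hv : forall a b, a != 0 -> b != 0 -> exists v, v != 0 /\ vrel x1 x2 idfun a b k v.
  move=> a b a0 b0; have hV := good_pt hy a b.
  have [vk hk] := domt hc hd hx a0 b0 Ak; have [vw hw] := domt hc hd hx a0 b0 Aw.
  exists vk; split => //.
  have h := gv_mul hV hk hw; rewrite ekw in h.
  have := gv_uniq hV h (vrel_y1 x1 x2 idfun a b) => e.
  by apply: contraNneq a0 => v0; rewrite -e v0 mul0r.
have [l [i [j [i' [j' [l0 em]]]]]] := monomial hy hv.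
have em1 : (k * x2 ^+ j) * x1 ^+ (i - i') = (cst l * x2 ^+ j') * x1 ^+ (i' - i).
  apply: norm_pow; first exact: (x1nz hx).
  by rewrite mulrAC em mulrAC.
have em2 : (k * x1 ^+ (i - i')) * x2 ^+ (j - j') = (cst l * x1 ^+ (i' - i)) * x2 ^+ (j' - j).
  apply: norm_pow; first exact: (x2nz hx).
  by rewrite mulrAC em1 mulrAC.
move: em2; set I := (i - i')%N; set I' := (i' - i)%N; set J := (j - j')%N; set J' := (j' - j)%N => em2.
have hI : (I = 0 \/ I' = 0)%N.
  by rewrite /I /I'; case: (leqP i i') => h; [left|right]; apply/eqP; rewrite subn_eq0 // ltnW.
have hJ : (J = 0 \/ J' = 0)%N.
  by rewrite /J /J'; case: (leqP j j') => h; [left|right]; apply/eqP; rewrite subn_eq0 // ltnW.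
have zm0 : zm != 0.
  apply/negP => /eqP z0; move: hzm; rewrite z0 expr0n eqn0Ngt (ltnW hd) /= => /eqP.
  by rewrite eq_sym oppr_eq0 oner_eq0.
have eta0 : eta != 0.
  apply/negP => /eqP z0; move: heta; rewrite z0 expr0n eqn0Ngt hc /= => /eqP.
  by rewrite eq_sym oppr_eq0 oner_eq0.
have hV2 := good_c hy (pK ('X ^+ d + 1)) (pK 'X) zm.
have hx1_2 := curve_x1 x (pK 'X) zm ('X ^+ d + 1).
rewrite !hornerE hzm addNr in hx1_2.
have hx2_2 := curve_x2 x (pK ('X ^+ d + 1)) zm 'X; rewrite hornerX in hx2_2.
have [vk hk] := domG2 hc hd hx hzm Ak; have [vg hg] := domG2 hc hd hx hzm Ag.
have vk0 : vk != 0.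
  have h := gv_mul hV2 hk hg; rewrite ekg in h.
  have := gv_uniq hV2 h (V_hx2 hV2 hp hx2_2) => e.
  by apply: contraNneq hpz => v0; rewrite -e v0 mul0r.
have [I0 I'0] := zero_pow_cases vk0 l0 zm0 hI (mono_val hV2 hk hx1_2 hx2_2 em2).
have hV3 := good_c hy (pK 'X) (pK ('X ^+ c + 1)) eta.
have hx2_3 := curve_x2 x (pK 'X) eta ('X ^+ c + 1).
rewrite !hornerE heta addNr in hx2_3.
have hx1_3 := curve_x1 x (pK ('X ^+ c + 1)) eta 'X; rewrite hornerX in hx1_3.
have [vk' hk'] := domG3 hc hd hx heta Ak; have [vg' hg'] := domG3 hc hd hx heta Ag.
have vk'0 : vk' != 0.
  have h := gv_mul hV3 hk' hg'; rewrite ekg in h.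
  have := gv_uniq hV3 h (V_hx2 hV3 hp hx2_3) => e.
  by apply: contraNneq hp0 => v0; rewrite -e v0 mul0r.
have em3 : k * x2 ^+ J * x1 ^+ I = cst l * x2 ^+ J' * x1 ^+ I' by rewrite mulrAC em2 mulrAC.
have := mono_val hV3 hk' hx1_3 hx2_3 em2.
rewrite I0 I'0 => ev.
have [J0 J'0] : (J = 0 /\ J' = 0)%N.
  by apply: (zero_pow_cases' vk'0 l0 _ _ hJ ev); rewrite expf_neq0.
exists l; split => //.
by move: em2; rewrite I0 I'0 J0 J'0 !expr0 !mulr1.
Qed.
End Final2.

Lemma nonunit_V (A : FF -> Prop) V (hV : goodV V) y :
  (forall z, A z -> dom V z) -> V y 0 -> ~ unitA A y.
Proof.
move=> hd hy [_ [z [Az e]]]; have [vz hz] := hd z Az.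
have h := gv_mul hV hy hz; rewrite e mul0r in h.
have := gv_uniq hV h (gv_one hV) => /eqP; by rewrite eq_sym oner_eq0.
Qed.

Theorem corollary6p4 (c d : nat) (hc : (1 <= c)%N) (hd : (2 <= d)%N)
  (x : 'I_2 -> FF) (hx : alg_indep x) :
  ~ factorial_ring (cluster_alg x (Bcd c d)).
Proof.
move=> fA.
have hy : forall P, P != 0 -> eval2 P (x ord0) (x ord_max) != 0 := hx.
have [z0 [z1 [q [hz0 hz1 eq q0 [q1 q00]]]]] := roots_setup hd.
have [eta heta] := root_neg1 hc.
have z00 : z0 != 0.
  apply/negP => /eqP z0e; move: hz0; rewrite z0e expr0n eqn0Ngt (ltnW hd) /= => /eqP.
  by rewrite eq_sym oppr_eq0 oner_eq0.
have z10 : z1 != 0.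
  apply/negP => /eqP z0e; move: hz1; rewrite z0e expr0n eqn0Ngt (ltnW hd) /= => /eqP.
  by rewrite eq_sym oppr_eq0 oner_eq0.
have z01 : z1 - z0 != 0.
  rewrite subr_eq0; apply/negP => /eqP e; by move: q0; rewrite -e q1 eqxx.
set b1 := hx2 x ('X - z0%:P); set b2 := hx2 x q.
have e : x ord0 * x1' d x = b1 * b2.
  rewrite /b1 /b2 -rmorphM -eq rmorphD rmorphXn hx2X rmorph1 /x1' mulrA.
  by rewrite (mulfV (x1nz hx)) mul1r.
have Ab1 := A_hx2 c d x ('X - z0%:P).
have Ab2 := A_hx2 c d x q.
have na1 : ~ unitA (cluster_alg x (Bcd c d)) (x ord0).
  apply: (nonunit_V (good_c hy (pK ('X ^+ d + 1)) (pK 'X) z0)).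
    by move=> z Az; apply: (domG2 hc hd hx hz0).
  have := curve_x1 x (pK 'X) z0 ('X ^+ d + 1); by rewrite !hornerE hz0 addNr.
have hV1 := fun b => good_pt hy 1 b.
have nb1 : ~ unitA (cluster_alg x (Bcd c d)) b1.
  apply: (nonunit_V (hV1 z0)); first by move=> z Az; apply: (domt hc hd hx (oner_neq0 _) z00).
  have := V_hx2 (hV1 z0) ('X - z0%:P) (vrel_y2 (x ord0) (x ord_max) idfun 1 z0).
  by rewrite hornerXsubC subrr.
have b10 : b1 != 0.
  apply: (gv_nz (hV1 z1) (V_hx2 (hV1 z1) ('X - z0%:P) (vrel_y2 (x ord0) (x ord_max) idfun 1 z1))).
  by rewrite hornerXsubC.
have b20 : b2 != 0.
  apply: (gv_nz (hV1 1) (V_hx2 (hV1 1) q (vrel_y2 (x ord0) (x ord_max) idfun 1 1))).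
  have := congr1 (fun r : {poly CC} => r.[1]) eq; rewrite !hornerE expr1n => e1.
  apply/negP => /eqP h; move: e1; rewrite h mulr0 => /eqP.
  by rewrite -[1 + 1]/(2%:R) pnatr_eq0.
have [k [w [g [ik Aw Ag ekw ekg]]]] :=
  ufd_split (A1 c d x) (AM (c := c) (d := d) (x := x)) fA (Ax1 c d x) (Ax1' c hd x) Ab1 Ab2
    (x1nz hx) na1 (x1'nz d hx) b10 nb1 b20 e.
have [Ak k0 nuk _] := ik.
have [l [l0 kl]] : exists l, l != 0 /\ k = cst l.
  case: ekg => ekg.
  - apply: (no_kappa hc hd hx Ak Aw Ag ekw ekg hz1 _ _ heta); first by rewrite hornerXsubC.
    by rewrite hornerXsubC sub0r oppr_eq0.
  - exact: (no_kappa hc hd hx Ak Aw Ag ekw ekg hz0 q0 q00 heta).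
apply: nuk; rewrite kl; split; first exact: ga_cst.
exists (cst l^-1); split; first exact: ga_cst.
by rewrite -cstM (mulfV l0) cst1.
Qed.
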